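(* For a connected graph $G=(V,E)$ with $|V|=n$ and $1\le k\le n$, \[Z_{\mu^*_k}\le\binom{n-1}{k-1}T(G)\le n^{k-1}T(G),\] where $T(G)$ is the number of spanning trees of $G$.
   Context: $Z_{\mu^*_k}=\sum_{\{P_1,\dots,P_k\}}\prod_{i=1}^kT(P_i)$, the sum over partitions of $V$ into $k$ nonempty parts, where $T(P_i)$ is the number of spanning trees of the induced subgraph $G[P_i]$ (zero if $G[P_i]$ is disconnected); equivalently, the number of forests of $G$ with exactly $n-k$ edges. *)

(* Defs.v *)
(* A finite simple graph on a finType V is given by a
   symmetric irreflexive relation e. Edges are 2-element vertex sets. *)
From mathcomp Require Import all_boot.
From mathcomp Require Import boolp.
Set Implicit Arguments. Unset Strict Implicit. Unset Printing Implicit Defensive.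

Section Graphs.
Variables (V : finType) (e : rel V).

Definition edge_set : {set {set V}} :=
  [set [set x; y] | x in V, y in V & e x y].

Definition induced_edges (B : {set V}) : {set {set V}} :=
  [set f in edge_set | f \subset B].

Definition adjF (F : {set {set V}}) : rel V := fun x y => [set x; y] \in F.

Definition has_cycle (F : {set {set V}}) : Prop :=
  exists s : seq V, 2 < size s /\ ucycle (adjF F) s.

Definition spanning_tree_of (B : {set V}) (F : {set {set V}}) : Prop :=
  [/\ F \subset induced_edges B,
      (forall x y, x \in B -> y \in B -> connect (adjF F) x y)
    & ~ has_cycle F].

Definition num_spanning_trees (B : {set V}) : nat :=
  #|[set F : {set {set V}} | `[< spanning_tree_of B F >] ]|.

Definition Zmu (k : nat) : nat :=
  \sum_(P in [set P : {set {set V}} | partition P [set: V] && (#|P| == k)])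
     \prod_(B in P) num_spanning_trees B.

Definition graph_connected : Prop := forall x y : V, connect e x y.

End Graphs.

(* Main.v *)
Require Import Defs.
From mathcomp Require Import all_boot boolp.
From mathcomp Require Import zify.
Set Implicit Arguments. Unset Strict Implicit. Unset Printing Implicit Defensive.

Lemma adjF_sym (V : finType) (F : {set {set V}}) : symmetric (adjF F).
Proof. by move=> x y; rewrite /adjF setUC. Qed.

Lemma connectF_sym (V : finType) (F : {set {set V}}) x y :
  connect (adjF F) x y = connect (adjF F) y x.
Proof. exact: (sym_connect_sym (adjF_sym F)). Qed.

Lemma conn_mono (V : finType) (F1 F2 : {set {set V}}) x y :
  F1 \subset F2 -> connect (adjF F1) x y -> connect (adjF F2) x y.
Proof.
move=> sF; apply: connect_sub => u v h; apply: connect1.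
by rewrite /adjF (subsetP sF).
Qed.

Lemma conn_closed (V : finType) (r : rel V) (P : pred V) x y :
  P x -> (forall u v, P u -> r u v -> P v) -> connect r x y -> P y.
Proof.
move=> Px hP /connectP [p pth ->]; elim: p x Px pth => //= z p IH x Px.
by case/andP => rxz pth; apply: (IH z (hP _ _ Px rxz) pth).
Qed.

Lemma conn_restrict (V : finType) (r r' : rel V) (S : pred V) x y :
  S x -> (forall u v, S u -> r u v -> r' u v && S v) -> connect r x y -> connect r' x y.
Proof.
move=> Sx hS /connectP [p pth ->]; elim: p x Sx pth => //= z p IH x Sx.
case/andP => rxz pth; case/andP: (hS _ _ Sx rxz) => r'xz Sz.
by apply: (connect_trans (connect1 r'xz)); apply: IH.
Qed.

Lemma set2_eq (V : finType) (a b u v : V) :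
  [set a; b] = [set u; v] -> (a = u /\ b = v) \/ (a = v /\ b = u).
Proof.
move=> h.
have ha : a \in [set u; v] by rewrite -h !inE eqxx.
have hb : b \in [set u; v] by rewrite -h !inE eqxx orbT.
have hu : u \in [set a; b] by rewrite h !inE eqxx.
have hv : v \in [set a; b] by rewrite h !inE eqxx orbT.
move: ha hb hu hv; rewrite !inE.
by do 4 (case/orP=> /eqP ?); subst; auto.
Qed.

Lemma connect_set0 (V : finType) (x y : V) : connect (adjF (set0 : {set {set V}})) x y -> x = y.
Proof.
move=> h; apply/esym/eqP; apply: (conn_closed (P := pred1 x) _ _ h) => //=.
by move=> u v _; rewrite /adjF inE.
Qed.

Definition acycb (V : finType) (F : {set {set V}}) : bool :=
  [forall x : V, forall y : V, (([set x; y] \in F) && (x != y)) ==>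
     ~~ connect (adjF (F :\ [set x; y])) x y].

Lemma acycbP (V : finType) (F : {set {set V}}) x y : acycb F -> [set x; y] \in F -> x != y ->
  ~~ connect (adjF (F :\ [set x; y])) x y.
Proof.
by move=> /forallP /(_ x) /forallP /(_ y) h hF hxy; move: h; rewrite hF hxy.
Qed.

Lemma cycle_of_notacyc (V : finType) (F : {set {set V}}) : ~~ acycb F -> has_cycle F.
Proof.
move=> /forallPn [x /forallPn [y]]; rewrite negb_imply negbK => /andP [/andP [hF hxy] hc].
rewrite connectF_sym in hc.
case/connectP: hc => p pth lastp.
move: lastp; case: (shortenP pth) => q pq uq _ lastq.
exists (y :: q); split.
  case: q pq uq lastq => [|z [|w q]] //=.
  - by move=> _ _ /eqP; rewrite (negbTE hxy).
  - move=> /andP [h _] _ xz; subst z; move: h; rewrite /adjF setUC.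
    by rewrite in_setD1 eqxx.
rewrite /ucycle uq andbT /= rcons_path -lastq /adjF hF andbT.
apply: sub_path pq => u v; rewrite /adjF in_setD1 => /andP [].
by [].
Qed.

Lemma path_all_rcons (V : finType) (P : pred V) a s b :
  all P (a :: s) -> path (fun u _ => P u) a (rcons s b).
Proof.
elim: s a => [|z s IH] a /=; first by rewrite andbT.
by case/andP => Pa hs; rewrite Pa /=; apply: IH.
Qed.

Lemma acyc_no_cycle (V : finType) (F : {set {set V}}) : acycb F -> ~ has_cycle F.
Proof.
move=> hA [s [hs /andP [cyc us]]].
case: s hs cyc us => [|x [|y [|z r]]] //= _.
move=> /and3P [hxy hyz pth] /and4P [nx ny nz ur].
move: nx ny; rewrite !inE !negb_or => /and3P [nxy nxz nxr] /andP [nyz nyr].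
have := acycbP hA hxy nxy; rewrite connectF_sym; apply/negP/negPn.
apply/connectP; exists (z :: rcons r x); last by rewrite -rcons_cons last_rcons.
have e1 : path (fun u v => [set u; v] != [set x; y]) y (z :: rcons r x).
  rewrite /=; apply/andP; split.
    apply/eqP => /set2_eq [[ex _]|[_ ez]]; first by rewrite ex eqxx in nxy.
    by rewrite ez eqxx in nxz.
  have hp : path (fun u _ => (u != x) && (u != y)) z (rcons r x).
    apply: path_all_rcons.
    rewrite /= eq_sym nxz eq_sym nyz /=; apply/allP => w wr /=.
    by apply/andP; split; apply/eqP => h; subst w; [rewrite wr in nxr | rewrite wr in nyr].
  move: hp; apply: sub_path.
  move=> u v /andP [ux uy]; apply/eqP => /set2_eq [[h _]|[h _]].
    by rewrite h eqxx in ux.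
  by rewrite h eqxx in uy.
have e2 : path (adjF F) y (z :: rcons r x) by rewrite /= hyz pth.
move: (conj e2 e1) => /andP; rewrite -path_relI; apply: sub_path => u v /andP [].
by rewrite /adjF in_setD1 => -> ->.
Qed.

Lemma edge_setP (V : finType) (e : rel V) f :
  f \in edge_set e -> exists x y, e x y /\ f = [set x; y].
Proof. by case/imset2P => x y _; rewrite inE => exy ->; exists x, y. Qed.

Lemma inducedP (V : finType) (e : rel V) B f :
  (f \in induced_edges e B) = (f \in edge_set e) && (f \subset B).
Proof. by rewrite inE. Qed.

Lemma set2_sub (V : finType) (x y : V) (B : {set V}) :
  ([set x; y] \subset B) = (x \in B) && (y \in B).
Proof. by rewrite subUset !sub1set. Qed.

Lemma acyc_sub (V : finType) (F G : {set {set V}}) : G \subset F -> acycb F -> acycb G.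
Proof.
move=> sGF hF; apply/forallP => x; apply/forallP => y; apply/implyP => /andP [hG hxy].
have := acycbP hF (subsetP sGF _ hG) hxy; apply: contra; apply: conn_mono.
by apply/subsetP => g; rewrite !in_setD1 => /andP [-> /(subsetP sGF) ->].
Qed.

Lemma edge_endpoints (V : finType) (e : rel V) (F : {set {set V}}) B u v :
  F \subset induced_edges e B -> [set u; v] \in F -> (u \in B) && (v \in B).
Proof. by move=> sF /(subsetP sF); rewrite inducedP set2_sub => /andP []. Qed.

Lemma tree_card_aux (V : finType) (e : rel V) n : irreflexive e ->
  forall (F : {set {set V}}) (B : {set V}), #|F| <= n ->
  F \subset induced_edges e B ->
  (forall x y, x \in B -> y \in B -> connect (adjF F) x y) -> acycb F ->
  #|F| = #|B| - 1.
Proof.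
move=> irr; elim: n => [|n IH] F B hn sF hc hA.
  have F0 : F = set0 by apply/eqP; rewrite -cards_eq0; lia.
  subst F; rewrite cards0.
  suff : #|B| <= 1 by lia.
  apply/card_le1_eqP => x y xB yB /=; have h := connect_set0 (hc x y xB yB); by rewrite h.
have [F0|/set0Pn [f fF]] := eqVneq F set0; first by subst F; rewrite cards0 -(IH set0 B) ?cards0.
have /edge_setP [x [y [exy fxy]]] : f \in edge_set e.
  by move: (subsetP sF f fF); rewrite inducedP => /andP [].
subst f.
have nxy : x != y by apply/eqP => h; subst y; rewrite irr in exy.
have /andP [xB yB] := edge_endpoints sF fF.
set F' := F :\ [set x; y].
have sF' : F' \subset F by apply/subsetP => g; rewrite in_setD1 => /andP [].
have sF'i : F' \subset induced_edges e B by apply: subset_trans sF' sF.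
have ncxy := acycbP hA fF nxy.
pose Bc a := [set z in B | connect (adjF F') a z].
pose Fc a := [set g in F' | g \subset Bc a].
have cardF : #|F| = #|F'|.+1 by rewrite (cardsD1 [set x; y] F) fF.
have hF'D g : (g \in F') = (g != [set x; y]) && (g \in F) by rewrite in_setD1.
rewrite -/F' in ncxy; clearbody F'.
have comp a : a \in B -> #|Fc a| = #|Bc a| - 1.
  move=> aB; apply: IH.
  - have : #|Fc a| <= #|F'| by apply: subset_leq_card; apply/subsetP => g; rewrite inE => /andP [].
    lia.
  - apply/subsetP => g; rewrite inE => /andP [gF' gs]; rewrite inducedP gs andbT.
    by move: (subsetP sF'i g gF'); rewrite inducedP => /andP [].
  - have key z : z \in Bc a -> connect (adjF (Fc a)) a z.
      rewrite inE => /andP [zB caz].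
      apply: (conn_restrict (S := fun z => z \in Bc a) (r := adjF F')) caz.
        by rewrite inE aB connect0.
      move=> u v; rewrite inE => /andP [uB cau] huv /=.
      have /andP [_ vB] := edge_endpoints sF'i huv.
      have vc : v \in Bc a by rewrite inE vB (connect_trans cau (connect1 huv)).
      rewrite vc andbT /adjF /Fc in_set; apply/andP; split; first exact: huv.
      by rewrite set2_sub vc andbT /Bc in_set uB cau.
    by move=> z w /key; rewrite connectF_sym => hz /key hw; apply: connect_trans hz hw.
  - by apply: (acyc_sub _ hA); apply/subsetP => g; rewrite /Fc in_set => /andP [/(subsetP sF')].
have disjB : Bc x :&: Bc y = set0.
  apply/setP => z; rewrite in_setI /Bc !in_set; apply/negP => /and3P [/andP [_ cxz] _ cyz].
  by move/negP: ncxy; apply; apply: connect_trans cxz _; rewrite connectF_sym.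
have coverB : B = Bc x :|: Bc y.
  apply/eqP; rewrite eqEsubset; apply/andP; split; last first.
    by apply/subsetP => z; rewrite !inE => /orP [/andP [] | /andP []].
  apply/subsetP => z zB; rewrite !inE zB /=.
  apply: (conn_closed (P := fun w => connect (adjF F') x w || connect (adjF F') y w)) (hc x z xB zB).
    by rewrite connect0.
  move=> u v hu huv.
  have [E|NE] := eqVneq [set u; v] [set x; y].
    by case: (set2_eq E) => [[_ ->]|[_ ->]]; rewrite connect0 ?orbT.
  have huv' : adjF F' u v by rewrite /adjF hF'D NE.
  by case/orP: hu => h; rewrite (connect_trans h (connect1 huv')) ?orbT.
have disjF : Fc x :&: Fc y = set0.
  apply/setP => g; rewrite !inE; apply/negP => /andP [/andP [gF' gx] /andP [_ gy]].
  have /edge_setP [u [v [_ guv]]] : g \in edge_set e.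
    by move: (subsetP sF'i g gF'); rewrite inducedP => /andP [].
  subst g; move: gx gy; rewrite !set2_sub => /andP [ux _] /andP [uy _].
  have : u \in Bc x :&: Bc y by rewrite in_setI ux uy.
  by rewrite disjB in_set0.
have coverF : F' = Fc x :|: Fc y.
  apply/eqP; rewrite eqEsubset; apply/andP; split; last first.
    by apply/subsetP => g; rewrite !inE => /orP [/andP [] | /andP []].
  apply/subsetP => g gF'.
  have /edge_setP [u [v [_ guv]]] : g \in edge_set e.
    by move: (subsetP sF'i g gF'); rewrite inducedP => /andP [].
  subst g; have /andP [uB vB] := edge_endpoints sF'i gF'.
  have : u \in Bc x :|: Bc y by rewrite -coverB.
  rewrite !inE gF' /= !set2_sub !inE uB vB /= => /orP [h|h].
    by rewrite h (connect_trans h (connect1 gF')).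
  by rewrite h (connect_trans h (connect1 gF')) orbT.
have xBx : x \in Bc x by rewrite inE xB connect0.
have yBy : y \in Bc y by rewrite inE yB connect0.
have c1 : #|B| = #|Bc x| + #|Bc y| by rewrite {1}coverB cardsU disjB cards0 subn0.
have c2 : #|F'| = #|Fc x| + #|Fc y| by rewrite {1}coverF cardsU disjF cards0 subn0.
have p1 : 0 < #|Bc x| by apply/card_gt0P; exists x.
have p2 : 0 < #|Bc y| by apply/card_gt0P; exists y.
rewrite cardF c2 (comp x xB) (comp y yB) c1; lia.
Qed.

Lemma connect_add (V : finType) (T : {set {set V}}) u v a b :
  connect (adjF ([set u; v] |: T)) a b ->
  [|| connect (adjF T) a b, connect (adjF T) a u && connect (adjF T) v b
    | connect (adjF T) a v && connect (adjF T) u b].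
Proof.
move=> h; apply: (conn_closed (P := fun w => [|| connect (adjF T) a w, connect (adjF T) a u && connect (adjF T) v w
    | connect (adjF T) a v && connect (adjF T) u w]) _ _ h); first by rewrite connect0.
move=> u' v' hu; rewrite /adjF in_setU1 => /orP [/eqP E|hT]; last first.
  have c := connect1 (e := adjF T) hT.
  case/or3P: hu => [h1|/andP [h1 h2]|/andP [h1 h2]].
  - by rewrite (connect_trans h1 c).
  - by rewrite h1 (connect_trans h2 c) orbT.
  - by rewrite h1 (connect_trans h2 c) !orbT.
move: hu; case: (set2_eq E) => [[-> ->]|[-> ->]] hu.
  case/or3P: hu => [h1|/andP [h1 h2]|/andP [h1 h2]].
  - by rewrite h1 connect0 orbT.
  - by rewrite h1 connect0 orbT.
  - by rewrite h1.
case/or3P: hu => [h1|/andP [h1 h2]|/andP [h1 h2]].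
- by rewrite h1 connect0 !orbT.
- by rewrite h1.
- by rewrite h1 connect0 !orbT.
Qed.

Lemma acyc_add (V : finType) (T : {set {set V}}) u v :
  acycb T -> ~~ connect (adjF T) u v -> u != v -> acycb ([set u; v] |: T).
Proof.
move=> hT nc nuv; apply/forallP => x; apply/forallP => y; apply/implyP => /andP [hin hxy].
have [E|NE] := eqVneq [set x; y] [set u; v].
  have sub : ([set u; v] |: T) :\ [set x; y] \subset T.
    by apply/subsetP => g; rewrite in_setD1 in_setU1 E => /andP [/negbTE -> ].
  apply/negP => /(conn_mono sub) c.
  case: (set2_eq E) => [[ex ey]|[ex ey]]; subst x y; move/negP: nc; apply => //.
  by rewrite connectF_sym.
have fT : [set x; y] \in T by move: hin; rewrite in_setU1 (negbTE NE).
have sub : ([set u; v] |: T) :\ [set x; y] \subset [set u; v] |: (T :\ [set x; y]).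
  apply/subsetP => g; rewrite in_setD1 !in_setU1 in_setD1.
  by case/andP => -> /orP [->|->]; rewrite ?orbT.
apply/negP => /(conn_mono sub) /connect_add /or3P [c|/andP [c1 c2]|/andP [c1 c2]].
- by move/negP: (acycbP hT fT hxy); apply.
- have sT : T :\ [set x; y] \subset T by apply/subsetP => g; rewrite in_setD1 => /andP [].
  move/negP: nc; apply; rewrite connectF_sym in c1; rewrite connectF_sym in c2.
  apply: connect_trans (conn_mono sT c1) _.
  by apply: connect_trans (connect1 (e := adjF T) fT) (conn_mono sT c2).
- have sT : T :\ [set x; y] \subset T by apply/subsetP => g; rewrite in_setD1 => /andP [].
  move/negP: nc; apply; rewrite connectF_sym; rewrite connectF_sym in c1; rewrite connectF_sym in c2.
  apply: connect_trans (conn_mono sT c1) _.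
  by apply: connect_trans (connect1 (e := adjF T) fT) (conn_mono sT c2).
Qed.

Lemma extend_tree (V : finType) (e : rel V) (F : {set {set V}}) :
  irreflexive e -> graph_connected e -> F \subset edge_set e -> acycb F ->
  exists T, spanning_tree_of e [set: V] T /\ F \subset T.
Proof.
move=> irr conn sF hF.
pose S := [set T : {set {set V}} | (F \subset T) && (T \subset edge_set e) && acycb T].
have FS : F \in S by rewrite inE subxx sF hF.
case: (@arg_maxnP _ F (fun T => T \in S) (fun T => #|T|) FS) => T.
rewrite inE => /andP [/andP [FT Te] hT] Tmax.
exists T; split => //; split.
- apply/subsetP => g gT; rewrite inducedP (subsetP Te _ gT); exact: subsetT.
- move=> x y _ _; apply: (conn_closed (r := e) _ _ (conn x y)); first exact: connect0.
  move=> u v cxu euv; apply/negPn/negP => ncxv.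
  have ncuv : ~~ connect (adjF T) u v.
    by apply: contra ncxv => cuv; apply: connect_trans cxu cuv.
  have nuv : u != v by apply/eqP => E; subst v; rewrite irr in euv.
  have nin : [set u; v] \notin T by apply: contra ncuv => h; apply: connect1.
  have : [set u; v] |: T \in S.
    rewrite inE; apply/andP; split; last exact: acyc_add.
    apply/andP; split; first by apply: subset_trans FT (subsetUr _ _).
    rewrite subUset Te andbT sub1set; apply/imset2P; exists u v => //.
    by rewrite inE.
  move/Tmax; rewrite cardsU1 nin; lia.
- exact: acyc_no_cycle.
Qed.

Definition STs (V : finType) (e : rel V) (B : {set V}) : {set {set {set V}}} :=
  [set F : {set {set V}} | `[< spanning_tree_of e B F >] ].

Definition Parts (V : finType) (k : nat) : {set {set {set V}}} :=
  [set P : {set {set V}} | partition P [set: V] && (#|P| == k)].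

Definition Dset (V : finType) (e : rel V) (k : nat) :
  {set {set {set V}} * {ffun {set V} -> {set {set V}}}} :=
  [set p | (p.1 \in Parts V k) && (p.2 \in pfamily set0 (mem p.1) (fun B => mem (STs e B)))].

Lemma Zmu_card (V : finType) (e : rel V) (k : nat) : Zmu e k = #|Dset e k|.
Proof.
rewrite /Zmu.
transitivity (\sum_(P in Parts V k) \prod_(B in P) \sum_(F in STs e B) 1).
  by apply: eq_bigr => P _; apply: eq_bigr => B _; rewrite sum1_card.
transitivity (\sum_(P in Parts V k) \sum_(g in pfamily set0 (mem P) (fun B => mem (STs e B))) 1).
  apply: eq_bigr => P _; rewrite (big_distr_big_dep set0).
  by apply: eq_bigr => g _; rewrite big1_eq.
rewrite pair_big_dep /Dset -sum1dep_card.
by apply: eq_bigl => p.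
Qed.

Definition blockfam (V : finType) (e : rel V) (P : {set {set V}}) (g : {set V} -> {set {set V}}) :=
  partition P [set: V] /\ forall B, B \in P -> spanning_tree_of e B (g B).

Definition Un (V : finType) (P : {set {set V}}) (g : {set V} -> {set {set V}}) :=
  \bigcup_(B in P) g B.

Lemma blk_uniq (V : finType) (P : {set {set V}}) B B' u :
  partition P [set: V] -> B \in P -> B' \in P -> u \in B -> u \in B' -> B = B'.
Proof.
case/and3P => _ triv _ hB hB' uB uB'.
by rewrite -(def_pblock triv hB uB) (def_pblock triv hB' uB').
Qed.

Lemma acyc_of_tree (V : finType) (e : rel V) B F : spanning_tree_of e B F -> acycb F.
Proof. by case=> _ _ nc; apply/negPn/negP => /cycle_of_notacyc. Qed.

Lemma blk_edge (V : finType) (e : rel V) P g B u v :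
  blockfam e P g -> B \in P -> [set u; v] \in g B -> (u \in B) && (v \in B).
Proof. by case=> _ ht hB; case: (ht B hB) => s _ _; apply: edge_endpoints s. Qed.

Lemma blk_UnP (V : finType) (e : rel V) P g u v :
  blockfam e P g -> [set u; v] \in Un P g ->
  exists2 B, B \in P & [&& [set u; v] \in g B, u \in B & v \in B].
Proof.
move=> bf /bigcupP [B hB h]; exists B => //.
by rewrite h; apply: blk_edge bf hB h.
Qed.

Lemma blk_comp (V : finType) (e : rel V) P g B x y :
  blockfam e P g -> B \in P -> x \in B -> connect (adjF (Un P g)) x y = (y \in B).
Proof.
move=> bf hB xB; apply/idP/idP => [c|yB].
  apply: (conn_closed (P := fun z => z \in B) xB _ c) => u w uB huw.
  case: (blk_UnP bf huw) => B' hB' /and3P [_ uB' wB'].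
  by rewrite (blk_uniq bf.1 hB hB' uB uB').
case: (bf.2 B hB) => _ hc _.
apply: (conn_mono _ (hc x y xB yB)); exact: (bigcup_sup _ hB).
Qed.

Lemma blk_acyc (V : finType) (e : rel V) P g :
  blockfam e P g -> acycb (Un P g).
Proof.
move=> bf; apply/forallP => x; apply/forallP => y; apply/implyP => /andP [hin nxy].
case: (blk_UnP bf hin) => B hB /and3P [hg xB yB].
have hA := acyc_of_tree (bf.2 B hB).
apply: contra (acycbP hA hg nxy).
apply: (conn_restrict (S := fun z => z \in B)) => // u w uB.
rewrite /adjF in_setD1 => /andP [ne huw].
case: (blk_UnP bf huw) => B' hB' /and3P [hg' uB' wB'].
have E := blk_uniq bf.1 hB hB' uB uB'; subst B'.
by rewrite in_setD1 ne hg' wB'.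
Qed.

Lemma blk_sub (V : finType) (e : rel V) P g :
  blockfam e P g -> Un P g \subset edge_set e.
Proof.
move=> bf; apply/subsetP => f /bigcupP [B hB hf].
case: (bf.2 B hB) => s _ _; move: (subsetP s f hf).
by rewrite inducedP => /andP [].
Qed.

Lemma blk_g (V : finType) (e : rel V) P g B :
  blockfam e P g -> B \in P -> g B = [set f in Un P g | f \subset B].
Proof.
move=> bf hB; apply/setP => f; rewrite inE; apply/idP/idP => [hf|/andP [hf sfB]].
  rewrite (subsetP (bigcup_sup _ hB) _ hf) /=.
  case: (bf.2 B hB) => s _ _; move: (subsetP s f hf).
  by rewrite inducedP => /andP [].
have /edge_setP [u [v [_ E]]] := subsetP (blk_sub bf) f hf; subst f.
case: (blk_UnP bf hf) => B' hB' /and3P [hg uB' _].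
move: sfB; rewrite set2_sub => /andP [uB _].
by rewrite (blk_uniq bf.1 hB hB' uB uB').
Qed.

Lemma card_bigcup_seq (I T : finType) (s : seq I) (f : I -> {set T}) :
  uniq s -> {in s &, forall i j, i != j -> f i :&: f j = set0} ->
  #|\bigcup_(i <- s) f i| = \sum_(i <- s) #|f i|.
Proof.
elim: s => [|i s IH] /=; first by rewrite !big_nil cards0.
case/andP => nis us hd.
rewrite !big_cons cardsU -IH //; last first.
  by move=> a b ha hb; apply: hd; rewrite inE ?ha ?hb orbT.
suff -> : f i :&: \bigcup_(j <- s) f j = set0 by rewrite cards0 subn0.
apply/setP => x; rewrite in_setI in_set0; rewrite bigcup_seq; apply/negP => /andP [xi /bigcupP [j js xj]].
have ij : i != j by apply: contraNneq nis => ->.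
have js2 : j \in i :: s by rewrite inE js orbT.
have := hd i j (mem_head _ _) js2 ij.
by move/setP/(_ x); rewrite in_setI xi xj in_set0.
Qed.

Lemma blk_card (V : finType) (e : rel V) P g :
  irreflexive e -> blockfam e P g -> #|Un P g| = #|V| - #|P|.
Proof.
move=> irr bf.
have -> : #|Un P g| = \sum_(B in P) #|g B|.
  rewrite /Un -big_enum -[RHS]big_enum; apply: card_bigcup_seq; first exact: enum_uniq.
  move=> B B'; rewrite !mem_enum => hB hB' ne; apply/setP => f.
  rewrite in_setI in_set0; apply/negP => /andP [f1 f2].
  have /edge_setP [u [v [_ E]]] : f \in edge_set e.
    by apply: (subsetP (blk_sub bf)); apply: (subsetP (bigcup_sup _ hB)).
  subst f; have /andP [uB _] := blk_edge bf hB f1.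
  have /andP [uB' _] := blk_edge bf hB' f2.
  by move/eqP: ne; apply; apply: blk_uniq bf.1 hB hB' uB uB'.
have hpart := bf.1.
have hn : #|V| = \sum_(B in P) #|B|.
  by rewrite -cardsT; apply: card_partition.
have s0 : set0 \notin P by case/and3P: hpart.
have e1 : \sum_(B in P) #|g B| + \sum_(B in P) 1 = \sum_(B in P) #|B|.
  rewrite -big_split; apply: eq_bigr => B hB /=.
  case: (bf.2 B hB) => s c _.
  rewrite (tree_card_aux irr (leqnn _) s c (acyc_of_tree (bf.2 B hB))).
  have : 0 < #|B|.
    rewrite card_gt0; apply: contraNneq s0 => <-; exact hB.
  lia.
rewrite sum1_card in e1; lia.
Qed.

Lemma blk_parts (V : finType) (e : rel V) P1 g1 P2 g2 :
  blockfam e P1 g1 -> blockfam e P2 g2 -> Un P1 g1 = Un P2 g2 -> P1 \subset P2.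
Proof.
move=> bf1 bf2 E; apply/subsetP => B hB.
have s0 : set0 \notin P1 by case/and3P: bf1.1.
have : B != set0 by apply: contraNneq s0 => <-.
case/set0Pn => x xB.
have : x \in cover P2 by case/and3P: bf2.1 => /eqP -> _ _; rewrite inE.
case/bigcupP => B' hB' xB'.
suff -> : B = B' by [].
apply/setP => y; rewrite -(blk_comp y bf1 hB xB) -(blk_comp y bf2 hB' xB') E //.
Qed.

Lemma Dset_facts (V : finType) (e : rel V) k p : p \in Dset e k ->
  [/\ p.1 \in Parts V k, blockfam e p.1 p.2 & forall B, B \notin p.1 -> p.2 B = set0].
Proof.
rewrite inE => /andP [hP /pfamilyP [/supportP hs hf]].
split => //.
  split; first by move: hP; rewrite inE => /andP [].
  by move=> B hB; move: (hf B hB); rewrite inE => /asboolP.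
Qed.

Lemma Dset_inj (V : finType) (e : rel V) k :
  {in Dset e k &, injective (fun p : {set {set V}} * {ffun {set V} -> {set {set V}}} => Un p.1 p.2)}.
Proof.
move=> [P1 g1] [P2 g2] /Dset_facts [_ bf1 z1] /Dset_facts [_ bf2 z2] /= E.
have EP : P1 = P2.
  by apply/eqP; rewrite eqEsubset (blk_parts bf1 bf2 E) (blk_parts bf2 bf1 (esym E)).
subst P2; congr (_, _); apply/ffunP => B.
have [hB|hB] := boolP (B \in P1); last by rewrite z1 // z2.
by rewrite (blk_g bf1 hB) (blk_g bf2 hB) E.
Qed.

Lemma bin_le_exp m n j : m <= n -> 'C(m, j) <= n ^ j.
Proof.
move=> mn.
have h1 : 'C(m, j) <= m ^_ j by rewrite -bin_ffact leq_pmulr ?fact_gt0.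
have h2 : m ^_ j <= m ^ j.
  elim: j m {h1 mn} => [|j IH] m //.
  rewrite ffactnS expnS leq_mul2l; apply/orP; right.
  apply: leq_trans (IH m.-1) _.
  by case: j {IH} => [|j] //; rewrite leq_exp2r // leq_pred.
have h3 : m ^ j <= n ^ j.
  by case: j {h1 h2} => [|j] //; rewrite leq_exp2r.
by apply: leq_trans h1 (leq_trans h2 h3).
Qed.

Definition Good (V : finType) (e : rel V) (m : nat) : {set {set {set V}}} :=
  [set F : {set {set V}} | (F \subset edge_set e) && acycb F && (#|F| == m)].

Lemma Good_bound (V : finType) (e : rel V) m :
  irreflexive e -> graph_connected e ->
  #|Good e m| <= #|STs e [set: V]| * 'C(#|V|.-1, m).
Proof.
move=> irr conn.
rewrite -sum1_card.
apply: (@leq_trans (\sum_(F in Good e m) \sum_(T in STs e [set: V]) (F \subset T : nat))).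
  apply: leq_sum => F; rewrite inE => /andP [/andP [sF hF] _].
  case: (extend_tree irr conn sF hF) => T [hT FT].
  have TS : T \in STs e [set: V] by rewrite inE; apply/asboolP.
  by rewrite (bigD1 T TS) /= FT.
rewrite exchange_big /= -sum_nat_const.
apply: leq_sum => T; rewrite inE => /asboolP hT.
have cT : #|T| = #|V|.-1.
  case: hT => s c nc.
  rewrite (tree_card_aux irr (leqnn _) s c) ?cardsT ?subn1 //.
  by apply/negPn/negP => /cycle_of_notacyc.
rewrite -cT -cards_draws -big_mkcondr /= sum1dep_card.
apply: subset_leq_card; apply/subsetP => F; rewrite !inE.
by case/andP => /andP [_ ->] ->.
Qed.

Theorem lemma5p1 (V : finType) (e : rel V) (k : nat) :
  symmetric e -> irreflexive e -> graph_connected e ->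
  1 <= k <= #|V| ->
  Zmu e k <= 'C(#|V|.-1, k.-1) * num_spanning_trees e [set: V] /\
  'C(#|V|.-1, k.-1) * num_spanning_trees e [set: V]
    <= #|V| ^ k.-1 * num_spanning_trees e [set: V].
Proof.
move=> _ irr conn /andP [k1 kn].
split; last by rewrite leq_mul2r bin_le_exp ?leq_pred ?orbT.
rewrite Zmu_card -(card_in_imset (@Dset_inj V e k)).
have sub : [set Un p.1 p.2 | p : {set {set V}} * {ffun {set V} -> {set {set V}}} in Dset e k] \subset Good e (#|V| - k).
  apply/subsetP => F /imsetP [p hp ->].
  case: (Dset_facts hp) => hP bf _.
  rewrite inE (blk_sub bf) (blk_acyc bf) (blk_card irr bf) /=.
  by move: hP; rewrite inE => /andP [_ /eqP ->].
apply: leq_trans (subset_leq_card sub) _.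
apply: leq_trans (Good_bound _ irr conn) _.
have -> : #|V| - k = #|V|.-1 - k.-1 by lia.
rewrite bin_sub; last by lia.
by rewrite mulnC.
Qed.
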